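(* Let $J=JCK(Z,\delta)$ and $K=Z\oplus Zx$. Then: (i) every odd derivation of $J$ is inner, $\mathrm{Der}(J)_{\bar1}=\mathrm{Inder}(J)_{\bar1}$; (ii) the restriction map $\mathrm{Der}(J)^{[\bar0,\bar0]}\to\mathrm{Der}(K)$, $\partial\mapsto\partial|_K$, is injective with image $\overline{\mathrm{Der}}(K)$; (iii) $\dim_{\mathbb F}\mathrm{Der}(J)_{\bar1}=4\dim_{\mathbb F}Z=\dim_{\mathbb F}J_{\bar1}$ (dimensions as cardinals).
   Context: Let $\mathbb F$ be a field of characteristic $\neq 2$, $Z$ a unital commutative associative $\mathbb F$-algebra, and $\delta$ a derivation of $Z$ such that $Z\delta(Z)=Z$ (the $\mathbb F$-span of all products $f\delta(g)$, $f,g\in Z$, is $Z$). The Cheng-Kac Jordan superalgebra $J=JCK(Z,\delta)=J_{\bar0}\oplus J_{\bar1}$ is defined as follows: $J_{\bar0}=Z1\oplus Zw_1\oplus Zw_2\oplus Zw_3$ and $J_{\bar1}=Zx\oplus Zx_1\oplus Zx_2\oplus Zx_3$ are free $Z$-modules of rank 4; $J_{\bar0}$ is the $Z$-algebra $(\mathbb F1\oplus\mathbb Fw_1\oplus\mathbb Fw_2\oplus\mathbb Fw_3)\otimes_{\mathbb F}Z$ with $1$ the identity, $w_1^2=w_2^2=1$, $w_3^2=-1$, $w_iw_j=0$ for $i\ne j$. For $f,g\in Z$ and $i,j\in\{1,2,3\}$ the remaining products are: $f(gx)=(fg)x$, $f(gx_j)=(fg)x_j$, $(fw_i)(gx)=(\delta(f)g)x_i$,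 $(fw_i)(gx_j)=-(fg)x_{i\times j}$, $(fx)(gx)=\delta(f)g-f\delta(g)$, $(fx)(gx_j)=-(fg)w_j$, $(fx_i)(gx)=(fg)w_i$, $(fx_i)(gx_j)=0$, extended by supercommutativity ($ab=(-1)^{|a||b|}ba$), where $x_{1\times2}=-x_{2\times1}=x_3$, $x_{1\times3}=-x_{3\times1}=x_2$, $x_{3\times2}=-x_{2\times3}=x_1$, $x_{i\times i}=0$. $J$ is $\mathbb Z_2^2$-graded by $J^{[\bar0,\bar0]}=Z\oplus Zx$, $J^{[\bar1,\bar0]}=Zw_1\oplus Zx_1$, $J^{[\bar0,\bar1]}=Zw_2\oplus Zx_2$, $J^{[\bar1,\bar1]}=Zw_3\oplus Zx_3$, and $\mathrm{Der}(J)^{\alpha}$ denotes the derivations mapping each $J^{\beta}$ into $J^{\alpha+\beta}$. Derivations are super derivations; $D(a,b)$ is $c\mapsto a(bc)-(-1)^{|a||b|}b(ac)$ and $\mathrm{Inder}$ is the span of all $D(a,b)$. $K=Z\oplus Zx$ is a subalgebra of $J$. For $a\in Z$, $\eta_a$ is the odd derivation of $K$ with $\eta_a(Z)=0$, $\eta_a(x)=a$. $\overline{\mathrm{Der}}(K)$ denotes the subalgebra $\mathrm{Der}(K)_{\bar0}\oplus\{\eta_a:a\in Z\}$ of $\mathrm{Der}(K)$. *)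

(* Defs.v *)
From HB Require Import structures.
From mathcomp Require Import all_boot all_order all_algebra.
Set Implicit Arguments. Unset Strict Implicit. Unset Printing Implicit Defensive.
Import GRing.Theory.
Local Open Scope ring_scope.

(* Generic super-notions for an F-superalgebra whose carrier V is an   *)
(* F-vector space, with product [mul] and homogeneity predicate        *)
(* [par p v] ("v is homogeneous of parity p", p = false : even,        *)
(* p = true : odd).                                                     *)
Section Super.
Variables (F : fieldType) (V : lmodType F) (mul : V -> V -> V)
          (par : bool -> V -> Prop).

Definition flinear (D : V -> V) :=
  forall (c : F) (u v : V), D (c *: u + v) = c *: D u + D v.

Definition sder (p : bool) (D : V -> V) :=
  [/\ flinear D,
      (forall q u, par q u -> par (addb q p) (D u)) &
      (forall q a b, par q a ->
         D (mul a b) = mul (D a) b + ((-1) ^+ (p && q)) *: mul a (D b))].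

Definition der (D : V -> V) :=
  exists D0 D1, [/\ sder false D0, sder true D1 & forall u, D u = D0 u + D1 u].

Definition odd_der (D : V -> V) := sder true D.

Definition Dop (p : bool) (a : V) (q : bool) (b : V) (c : V) :=
  mul a (mul b c) - ((-1) ^+ (p && q)) *: mul b (mul a c).

Definition inder (D : V -> V) :=
  exists s : seq (F * (bool * V) * (bool * V)),
    (forall t, t \in s -> par t.1.2.1 t.1.2.2 /\ par t.2.1 t.2.2) /\
    forall c, D c = \sum_(t <- s) t.1.1 *: Dop t.1.2.1 t.1.2.2 t.2.1 t.2.2 c.

Definition odd_map (D : V -> V) := forall q u, par q u -> par (~~ q) (D u).

Definition odd_inder (D : V -> V) := inder D /\ odd_map D.

End Super.

(* An element  a0 1 + a1 w1 + a2 w2 + a3 w3 + b0 x + b1 x1 + b2 x2      *)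
(*   + b3 x3   is represented as ((a0,a1,a2,a3),(b0,b1,b2,b3)).         *)
Section ChengKac.
Variables (F : fieldType) (Z : comAlgType F) (delta : Z -> Z).

Definition JCK : lmodType F := ((Z * Z * Z * Z) * (Z * Z * Z * Z))%type.

Definition mkJ (a0 a1 a2 a3 b0 b1 b2 b3 : Z) : JCK :=
  ((a0, a1, a2, a3), (b0, b1, b2, b3)).

Definition je0 (u : JCK) : Z := u.1.1.1.1.
Definition je1 (u : JCK) : Z := u.1.1.1.2.
Definition je2 (u : JCK) : Z := u.1.1.2.
Definition je3 (u : JCK) : Z := u.1.2.
Definition jo0 (u : JCK) : Z := u.2.1.1.1.
Definition jo1 (u : JCK) : Z := u.2.1.1.2.
Definition jo2 (u : JCK) : Z := u.2.1.2.
Definition jo3 (u : JCK) : Z := u.2.2.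

(* The product, obtained by expanding bilinearly the multiplication table:
   w1^2 = w2^2 = 1, w3^2 = -1, wi wj = 0 (i<>j),
   (f wi)(g x) = (delta f g) xi, (f wi)(g xj) = -(fg) x_{i x j},
   (fx)(gx) = delta f g - f delta g, (fx)(g xj) = -(fg) wj,
   (f xi)(g x) = (fg) wi, (f xi)(g xj) = 0, super-commutativity,
   with x_{1x2} = x3 = -x_{2x1}, x_{1x3} = x2 = -x_{3x1},
   x_{3x2} = x1 = -x_{2x3}. *)
Definition mulJ (u v : JCK) : JCK :=
  let a0 := je0 u in let a1 := je1 u in let a2 := je2 u in let a3 := je3 u in
  let b0 := jo0 u in let b1 := jo1 u in let b2 := jo2 u in let b3 := jo3 u in
  let c0 := je0 v in let c1 := je1 v in let c2 := je2 v in let c3 := je3 v in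
  let d0 := jo0 v in let d1 := jo1 v in let d2 := jo2 v in let d3 := jo3 v in
  mkJ
    (a0 * c0 + a1 * c1 + a2 * c2 - a3 * c3 + delta b0 * d0 - b0 * delta d0)
    (a0 * c1 + a1 * c0 - b0 * d1 + b1 * d0)
    (a0 * c2 + a2 * c0 - b0 * d2 + b2 * d0)
    (a0 * c3 + a3 * c0 - b0 * d3 + b3 * d0)
    (a0 * d0 + c0 * b0)
    (a0 * d1 + c0 * b1 + delta a1 * d0 + delta c1 * b0
       + a2 * d3 - a3 * d2 + c2 * b3 - c3 * b2)
    (a0 * d2 + c0 * b2 + delta a2 * d0 + delta c2 * b0
       + a3 * d1 - a1 * d3 + c3 * b1 - c1 * b3)
    (a0 * d3 + c0 * b3 + delta a3 * d0 + delta c3 * b0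
       + a2 * d1 - a1 * d2 + c2 * b1 - c1 * b2).

Definition parJ (p : bool) (u : JCK) : Prop :=
  if p then u.1 = 0 else u.2 = 0.

(* Z_2^2-grading: component k (k = 0,1,2,3 for [0,0],[1,0],[0,1],[1,1])
   consists of the coefficients of w_k and x_k (w_0 = 1, x_0 = x) *)
Definition jcomp (k : nat) (u : JCK) : Z * Z :=
  match k with
  | 0 => (je0 u, jo0 u)
  | 1 => (je1 u, jo1 u)
  | 2 => (je2 u, jo2 u)
  | _ => (je3 u, jo3 u)
  end%N.

Definition inJdeg (k : nat) (u : JCK) : Prop :=
  forall l, (l < 4)%N -> l != k -> jcomp l u = 0.

Definition der00 (D : JCK -> JCK) : Prop :=
  der mulJ parJ D /\
  forall k u, (k < 4)%N -> inJdeg k u -> inJdeg k (D u).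

(* K = Z (+) Zx, an element f + g x represented as (f, g) *)
Definition KCK : lmodType F := (Z * Z)%type.

Definition mulK (u v : KCK) : KCK :=
  (u.1 * v.1 + delta u.2 * v.2 - u.2 * delta v.2, u.1 * v.2 + v.1 * u.2).

Definition parK (p : bool) (u : KCK) : Prop :=
  if p then u.1 = 0 else u.2 = 0.

Definition KtoJ (k : KCK) : JCK := mkJ k.1 0 0 0 k.2 0 0 0.
Definition restrK (D : JCK -> JCK) (k : KCK) : KCK :=
  (je0 (D (KtoJ k)), jo0 (D (KtoJ k))).

(* eta_a : the odd derivation of K with eta_a(Z) = 0, eta_a(x) = a,
   i.e. eta_a(f + g x) = g a *)
Definition etaK (a : Z) (k : KCK) : KCK := (k.2 * a, 0).

Definition derbarK (d : KCK -> KCK) : Prop :=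
  exists D0 a, sder mulK parK false D0 /\ forall k, d k = D0 k + etaK a k.

End ChengKac.

(* Main.v *)
Require Import Defs.
From HB Require Import structures.
From mathcomp Require Import all_boot all_order all_algebra.
From Stdlib Require Import Ring.
Import GRing.Theory.
Local Open Scope ring_scope.

Module MA.
Import GRing.Theory.
Local Open Scope ring_scope.
Import GRing.Theory.
Local Open Scope ring_scope.

Section Ringz.
Variables (F : fieldType) (Z : comAlgType F).
Definition zadd (x y : Z) : Z := x + y.
Definition zmul (x y : Z) : Z := x * y.
Definition zopp (x : Z) : Z := - x.
Definition zsub (x y : Z) : Z := x - y.
Definition z0 : Z := 0.
Definition z1 : Z := 1.
Lemma Zrt : @ring_theory Z z0 z1 zadd zmul zsub zopp eq.
Proof.
rewrite /zadd /zmul /zopp /zsub /z0 /z1.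
constructor => //.
- exact: add0r. - exact: addrC. - exact: addrA. - exact: mul1r. - exact: mulrC.
- exact: mulrA. - exact: mulrDl. - exact: subrr.
Qed.
Lemma zE1 (x y : Z) : x + y = zadd x y. Proof. by []. Qed.
Lemma zE2 (x y : Z) : x * y = zmul x y. Proof. by []. Qed.
Lemma zE3 (x : Z) : - x = zopp x. Proof. by []. Qed.
Lemma zE4 : 0 = z0 :> Z. Proof. by []. Qed.
Lemma zE5 : 1 = z1 :> Z. Proof. by []. Qed.
Definition sc (c : F) : Z := c%:A.
Lemma scE (c : F) (x : Z) : c *: x = sc c * x. Proof. by rewrite /sc mulr_algl. Qed.
Lemma zeqI (x y : Z) : @eq Z x y -> x = y. Proof. by []. Qed.
Lemma pairP (A B : Type) (a a' : A) (b b' : B) : a = a' -> b = b' -> (a,b) = (a',b').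
Proof. by move=> -> ->. Qed.
Lemma addJE (a0 a1 a2 a3 b0 b1 b2 b3 c0 c1 c2 c3 d0 d1 d2 d3 : Z) :
  ((a0,a1,a2,a3,(b0,b1,b2,b3)) : JCK Z) + (c0,c1,c2,c3,(d0,d1,d2,d3))
  = (a0+c0,a1+c1,a2+c2,a3+c3,(b0+d0,b1+d1,b2+d2,b3+d3)).
Proof. by []. Qed.
Lemma scaleJE (c : F) (a0 a1 a2 a3 b0 b1 b2 b3 : Z) :
  c *: ((a0,a1,a2,a3,(b0,b1,b2,b3)) : JCK Z)
  = (c*:a0,c*:a1,c*:a2,c*:a3,(c*:b0,c*:b1,c*:b2,c*:b3)).
Proof. by []. Qed.
Lemma oppJE (a0 a1 a2 a3 b0 b1 b2 b3 : Z) :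
  - ((a0,a1,a2,a3,(b0,b1,b2,b3)) : JCK Z)
  = (-a0,-a1,-a2,-a3,(-b0,-b1,-b2,-b3)).
Proof. by []. Qed.
Lemma zeroJE : (0 : JCK Z) = (0,0,0,0,(0,0,0,0)).
Proof. by []. Qed.
Lemma zero4E : (0 : Z * Z * Z * Z) = (0,0,0,0).
Proof. by []. Qed.
End Ringz.

Section Main.
Variables (F : fieldType) (Z : comAlgType F) (delta : Z -> Z).
Definition ZrtZ := @Zrt F Z.
Add Ring Zr : ZrtZ.
Ltac zring := apply: zeqI; rewrite ?zE1 ?zE2 ?zE3 ?zE4 ?zE5; ring.
Hypothesis delta_add : forall f g : Z, delta (f + g) = delta f + delta g.
Hypothesis delta_scale : forall (c : F) (f : Z), delta (c *: f) = c *: delta f.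
Hypothesis delta_mul : forall f g : Z, delta (f * g) = delta f * g + f * delta g.

Lemma delta0 : delta 0 = 0.
Proof. apply: (@addrI _ (delta 0)); by rewrite addr0 -delta_add addr0. Qed.
Lemma delta_opp f : delta (- f) = - delta f.
Proof. by rewrite -scaleN1r delta_scale scaleN1r. Qed.
Lemma delta1 : delta 1 = 0.
Proof.
apply: (@addrI _ (delta 1)); by rewrite addr0 -{1}[delta 1]mulr1 -{2}[delta 1]mul1r -delta_mul mulr1.
Qed.

Ltac dexp := repeat progress rewrite ?delta_add ?delta_opp ?delta_mul ?delta_scale ?delta0 ?delta1.
Ltac jnorm := cbv beta iota zeta delta [mulJ mkJ je0 je1 je2 je3 jo0 jo1 jo2 jo3 fst snd];
  rewrite ?zeroJE ?addJE ?scaleJE ?oppJE /=.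
Ltac cfin := dexp; rewrite ?scE; zring.
Ltac jfin := repeat (apply: pairP); cfin.

Definition Dodd (q p1 p2 p3 : Z) (u : JCK Z) : JCK Z :=
  let a0 := je0 u in let a1 := je1 u in let a2 := je2 u in let a3 := je3 u in
  let b0 := jo0 u in let b1 := jo1 u in let b2 := jo2 u in let b3 := jo3 u in
  mkJ (- b0 * q + b1 * p1 + b2 * p2 + b3 * p3)
      (p1 * delta b0 - b0 * delta p1 - b3 * p2 - b2 * p3)
      (p2 * delta b0 - b0 * delta p2 + b1 * p3 + b3 * p1)
      (- p3 * delta b0 + b0 * delta p3 - b1 * p2 + b2 * p1)
      (a1 * p1 + a2 * p2 + a3 * p3)
      (p1 * delta a0 + a1 * q - p2 * delta a3 - p3 * delta a2)
      (p2 * delta a0 + a2 * q + p3 * delta a1 + p1 * delta a3)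
      (- p3 * delta a0 + a3 * q - p2 * delta a1 + p1 * delta a2).

Lemma Dodd_sder q p1 p2 p3 : sder (mulJ delta) (@parJ F Z) true (Dodd q p1 p2 p3).
Proof.
split.
- move=> c [[[[a0 a1] a2] a3] [[[b0 b1] b2] b3]] [[[[c0 c1] c2] c3] [[[d0 d1] d2] d3]].
  rewrite /Dodd; jnorm; jfin.
- move=> [] [[[[a0 a1] a2] a3] [[[b0 b1] b2] b3]]; rewrite /parJ /= ?zero4E => -[-> -> -> ->];
  rewrite /Dodd; jnorm; jfin.
- move=> [] [[[[a0 a1] a2] a3] [[[b0 b1] b2] b3]] [[[[c0 c1] c2] c3] [[[d0 d1] d2] d3]];
  rewrite /parJ /= ?zero4E => -[-> -> -> ->];
  rewrite /Dodd ?expr1 ?expr0 ?scale1r ?scaleN1r; jnorm; jfin.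
Qed.
End Main.

End MA.
Import MA.

Module MB.
Import GRing.Theory.
Local Open Scope ring_scope.
Import GRing.Theory.
Set Implicit Arguments. Unset Strict Implicit. Unset Printing Implicit Defensive.
Local Open Scope ring_scope.

Section Basis.
Variables (F : fieldType) (Z : comAlgType F).
Definition jI (f : Z) : JCK Z := mkJ f 0 0 0 0 0 0 0.
Definition eW1 : JCK Z := mkJ 0 1 0 0 0 0 0 0.
Definition eW2 : JCK Z := mkJ 0 0 1 0 0 0 0 0.
Definition eW3 : JCK Z := mkJ 0 0 0 1 0 0 0 0.
Definition eX : JCK Z := mkJ 0 0 0 0 1 0 0 0.
Definition eX1 : JCK Z := mkJ 0 0 0 0 0 1 0 0.
Definition eX2 : JCK Z := mkJ 0 0 0 0 0 0 1 0.
Definition eX3 : JCK Z := mkJ 0 0 0 0 0 0 0 1.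
Lemma jeta (u : JCK Z) : u = mkJ (je0 u) (je1 u) (je2 u) (je3 u) (jo0 u) (jo1 u) (jo2 u) (jo3 u).
Proof. by case: u => [[[[? ?] ?] ?] [[[? ?] ?] ?]]. Qed.
Lemma J8inj (a0 a1 a2 a3 b0 b1 b2 b3 c0 c1 c2 c3 d0 d1 d2 d3 : Z) :
  mkJ a0 a1 a2 a3 b0 b1 b2 b3 = mkJ c0 c1 c2 c3 d0 d1 d2 d3 ->
  [/\ a0 = c0, a1 = c1, a2 = c2 & a3 = c3] /\ [/\ b0 = d0, b1 = d1, b2 = d2 & b3 = d3].
Proof. by case=> -> -> -> -> -> -> -> ->. Qed.
Lemma eqf (A B C D K : Z) : A = B -> C - D = K * (A - B) -> C = D.
Proof. by move=> -> h; apply/eqP; rewrite -subr_eq0 h subrr mulr0. Qed.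
Lemma oddE (u : JCK Z) : parJ true u -> u = mkJ 0 0 0 0 (jo0 u) (jo1 u) (jo2 u) (jo3 u).
Proof. by case: u => [[[[? ?] ?] ?] [[[? ?] ?] ?]]; rewrite /parJ /= zero4E => -[-> -> -> ->]. Qed.
Lemma evenE (u : JCK Z) : parJ false u -> u = mkJ (je0 u) (je1 u) (je2 u) (je3 u) 0 0 0 0.
Proof. by case: u => [[[[? ?] ?] ?] [[[? ?] ?] ?]]; rewrite /parJ /= zero4E => -[-> -> -> ->]. Qed.
Lemma parI f : parJ false (jI f). Proof. by []. Qed.
End Basis.
Arguments eW1 {F Z}. Arguments eW2 {F Z}. Arguments eW3 {F Z}. Arguments eX {F Z}. Arguments eX1 {F Z}. Arguments eX2 {F Z}. Arguments eX3 {F Z}.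

Section Gen.
Variables (F : fieldType) (Z : comAlgType F) (delta : Z -> Z).
Definition ZrtZ2 := @Zrt F Z.
Add Ring Zr : ZrtZ2.
Ltac zring := apply: zeqI; rewrite -[LHS]add0r -[RHS]add0r ?zE1 ?zE2 ?zE3 ?zE4 ?zE5; ring.
Hypothesis delta_add : forall f g : Z, delta (f + g) = delta f + delta g.
Hypothesis delta_scale : forall (c : F) (f : Z), delta (c *: f) = c *: delta f.
Hypothesis delta_mul : forall f g : Z, delta (f * g) = delta f * g + f * delta g.
Let d0 : delta 0 = 0 := @delta0 F Z delta delta_add.
Let dopp f : delta (- f) = - delta f := @delta_opp F Z delta delta_scale f.
Let d1 : delta 1 = 0 := @delta1 F Z delta delta_mul.
Ltac dexp := repeat progress rewrite ?delta_add ?dopp ?delta_mul ?delta_scale ?d0 ?d1.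
Ltac jnorm := cbv beta iota zeta delta [mulJ mkJ je0 je1 je2 je3 jo0 jo1 jo2 jo3 fst snd];
  rewrite ?zeroJE ?addJE ?scaleJE ?oppJE /=.
Ltac cfin := dexp; rewrite ?scE; zring.
Ltac jfin := repeat (apply: pairP); cfin.

Lemma sder_lin p D : sder (mulJ delta) (@parJ F Z) p D ->
  [/\ (forall u v, D (u + v) = D u + D v), D 0 = 0, (forall u, D (- u) = - D u)
    & (forall c u, D (c *: u) = c *: D u)].
Proof.
case; rewrite /flinear => hl _ _.
have ha u v : D (u + v) = D u + D v by rewrite -{1}[u]scale1r hl scale1r.
have h0 : D 0 = 0.
  by apply: (@addrI _ (D 0)); rewrite -ha !addr0.
split => //.
- by move=> u; apply/eqP; rewrite -subr_eq0 opprK -ha addNr h0.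
- by move=> c u; rewrite -[c *: u]addr0 hl h0 addr0.
Qed.

Lemma sder_ev p D : sder (mulJ delta) (@parJ F Z) p D -> forall a b, parJ false a ->
  D (mulJ delta a b) = mulJ delta (D a) b + mulJ delta a (D b).
Proof. by case=> _ _ h a b ha; rewrite (h false a b ha) andbF expr0 scale1r. Qed.

Lemma decompJ (u : JCK Z) : u = jI (je0 u) + mulJ delta (jI (je1 u)) eW1
  + mulJ delta (jI (je2 u)) eW2 + mulJ delta (jI (je3 u)) eW3
  + mulJ delta (jI (jo0 u)) eX + mulJ delta (jI (jo1 u)) eX1
  + mulJ delta (jI (jo2 u)) eX2 + mulJ delta (jI (jo3 u)) eX3.
Proof.
case: u => [[[[a0 a1] a2] a3] [[[b0 b1] b2] b3]].
rewrite /jI /eW1 /eW2 /eW3 /eX /eX1 /eX2 /eX3; jnorm; jfin.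
Qed.

Lemma agree p1 p2 D1 D2 : sder (mulJ delta) (@parJ F Z) p1 D1 ->
  sder (mulJ delta) (@parJ F Z) p2 D2 ->
  (forall f, D1 (jI f) = D2 (jI f)) -> D1 eW1 = D2 eW1 -> D1 eW2 = D2 eW2 ->
  D1 eW3 = D2 eW3 -> D1 eX = D2 eX -> D1 eX1 = D2 eX1 -> D1 eX2 = D2 eX2 ->
  D1 eX3 = D2 eX3 -> forall u, D1 u = D2 u.
Proof.
move=> h1 h2 hI e1 e2 e3 e4 e5 e6 e7 u.
have [a1 _ _ _] := sder_lin h1; have [a2 _ _ _] := sder_lin h2.
rewrite (decompJ u) !a1 !a2 !(sder_ev h1) ?parI // !(sder_ev h2) ?parI //.
by rewrite !hI e1 e2 e3 e4 e5 e6 e7.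
Qed.
End Gen.

End MB.
Import MB.

Module MB2.
Import GRing.Theory.
Local Open Scope ring_scope.
Import GRing.Theory.
Set Implicit Arguments. Unset Strict Implicit. Unset Printing Implicit Defensive.
Local Open Scope ring_scope.
Arguments Dodd {F Z}.
Section B2S.
Variables (F : fieldType) (Z : comAlgType F) (delta : Z -> Z).
Hypothesis char2 : (2%:R : F) != 0.
Hypothesis ZdZ : forall z : Z, exists s : seq (Z * Z), z = \sum_(p <- s) p.1 * delta p.2.

Lemma killZ (y : Z) : (forall g, delta g * y = 0) -> y = 0.
Proof.
move=> h; have [s hs] := ZdZ 1.
have -> : y = (\sum_(p <- s) p.1 * delta p.2) * y by rewrite -hs mul1r.
rewrite big_distrl big1 // => p _; change (p.1 * delta p.2 * y = 0).
by rewrite -mulrA h mulr0.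
Qed.

Lemma eqf2 (A B C D K : Z) : A = B -> (C - D) + (C - D) = K * (A - B) -> C = D.
Proof.
move=> hab h.
have : (2%:R : F) *: (C - D) = 0 by rewrite scaler_nat mulr2n h hab subrr mulr0.
by move/eqP; rewrite scaler_eq0 (negbTE char2) /= subr_eq0 => /eqP.
Qed.

Lemma oddEx (u : JCK Z) : parJ true u -> exists y0 y1 y2 y3, u = mkJ 0 0 0 0 y0 y1 y2 y3.
Proof. by move=> h; rewrite (oddE h); do 4 eexists. Qed.
Lemma evenEx (u : JCK Z) : parJ false u -> exists y0 y1 y2 y3, u = mkJ y0 y1 y2 y3 0 0 0 0.
Proof. by move=> h; rewrite (evenE h); do 4 eexists. Qed.
End B2S.

End MB2.
Import MB2.

Module MC4.
Import GRing.Theory.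
Local Open Scope ring_scope.
Import GRing.Theory.
Set Implicit Arguments. Unset Strict Implicit. Unset Printing Implicit Defensive.
Local Open Scope ring_scope.
Arguments Dodd {F Z}.
Section Odd.
Variables (F : fieldType) (Z : comAlgType F) (delta : Z -> Z).
Definition ZrtZ6 := @Zrt F Z.
Add Ring Zr : ZrtZ6.
Ltac zring := apply: zeqI; rewrite -[LHS]add0r -[RHS]add0r ?zE1 ?zE2 ?zE3 ?zE4 ?zE5; ring.
Hypothesis delta_add : forall f g : Z, delta (f + g) = delta f + delta g.
Hypothesis delta_scale : forall (c : F) (f : Z), delta (c *: f) = c *: delta f.
Hypothesis delta_mul : forall f g : Z, delta (f * g) = delta f * g + f * delta g.
Let dlt0 : delta 0 = 0 := @delta0 F Z delta delta_add.
Let dltopp f : delta (- f) = - delta f := @delta_opp F Z delta delta_scale f.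
Let dlt1 : delta 1 = 0 := @delta1 F Z delta delta_mul.
Ltac dexp := repeat progress rewrite ?delta_add ?dltopp ?delta_mul ?delta_scale ?dlt0 ?dlt1.
Ltac jnorm := cbv beta iota zeta delta [mulJ mkJ je0 je1 je2 je3 jo0 jo1 jo2 jo3 fst snd jI eW1 eW2 eW3 eX eX1 eX2 eX3 Dodd];
  rewrite ?zeroJE ?addJE ?scaleJE ?oppJE /=.
Ltac jnormH H := cbv beta iota zeta delta [mulJ mkJ je0 je1 je2 je3 jo0 jo1 jo2 jo3 fst snd jI eW1 eW2 eW3 eX eX1 eX2 eX3 Dodd] in H;
  rewrite ?zeroJE ?addJE ?scaleJE ?oppJE /= in H.
Ltac cfin := dexp; rewrite ?scE; zring.
Ltac jfin := repeat (apply: pairP); cfin.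
Hypothesis char2 : (2%:R : F) != 0.
Hypothesis ZdZ : forall z : Z, exists s : seq (Z * Z), z = \sum_(p <- s) p.1 * delta p.2.
Ltac seq1 h := first [idtac "TRY eqf 1" h; apply: (eqf (K:=1) h); cfin | idtac "TRY eqf -1" h; apply: (eqf (K:=-1) h); cfin].
Ltac seq2 h := first [idtac "TRY eqf2 1" h; apply: (eqf2 char2 (K:=1) h); cfin | idtac "TRY eqf2 -1" h; apply: (eqf2 char2 (K:=-1) h); cfin].
Ltac seqx x := idtac "GOAL"; first [cfin; idtac "TRY direct" | match goal with h : ?A = ?B |- _ => lazymatch type of h with context[x] => seq1 h end end].
Ltac jsplit := rewrite ?zeroJE; repeat (apply: pairP).
Ltac seqx2 x := idtac "GOAL"; match goal with h : ?A = ?B |- _ => lazymatch type of h with context[x] => seq2 h end end.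
Lemma odd_char D : sder (mulJ delta) (@parJ F Z) true D ->
  forall u, D u = Dodd delta (jo1 (D eW1)) (jo0 (D eW1)) (jo0 (D eW2)) (jo0 (D eW3)) u.
Proof.
move=> hs.
have [ha h0 hn hsc] := sder_lin hs.
have hev := sder_ev hs.
have [_ hpar _] := hs.
have pW1 : parJ false (@eW1 F Z) by [].
have pW2 : parJ false (@eW2 F Z) by [].
have pW3 : parJ false (@eW3 F Z) by [].
have pX : parJ true (@eX F Z) by [].
have pX1 : parJ true (@eX1 F Z) by [].
have pX2 : parJ true (@eX2 F Z) by [].
have pX3 : parJ true (@eX3 F Z) by [].
have [y0 [y1 [y2 [y3 hW1]]]] := oddEx (hpar false _ pW1).
have [z0 [z1 [z2 [z3 hW2]]]] := oddEx (hpar false _ pW2).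
have [t0 [t1 [t2 [t3 hW3]]]] := oddEx (hpar false _ pW3).
have [c0 [c1 [c2 [c3 hX]]]] := evenEx (hpar true _ pX).
have [al0 [al1 [al2 [al3 hI]]]] : exists al0 al1 al2 al3 : Z -> Z,
    forall f, D (jI f) = mkJ 0 0 0 0 (al0 f) (al1 f) (al2 f) (al3 f).
  exists (fun f => jo0 (D (jI f))), (fun f => jo1 (D (jI f))),
    (fun f => jo2 (D (jI f))), (fun f => jo3 (D (jI f))) => f.
  exact: (oddE (hpar false _ (parI f))).
have h1 : D (jI 1) = 0.
  have E := hev (jI 1) (jI 1) (parI 1).
  have m : mulJ delta (jI 1) (jI 1) = jI 1 by jnorm; jfin.
  rewrite m hI in E; jnormH E; move/J8inj: E => [[e0 e1 e2 e3] [e4 e5 e6 e7]].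
  have [? [? [? ?]]] : al0 1 = 0 /\ al1 1 = 0 /\ al2 1 = 0 /\ al3 1 = 0.
    split; [(apply: (eqf (K:=-1) e4); cfin) | split; [(apply: (eqf (K:=-1) e5); cfin) | split; [(apply: (eqf (K:=-1) e6); cfin) | (apply: (eqf (K:=-1) e7); cfin)]]].
  by rewrite hI; jnorm; jsplit.

have [u0 [u1 [u2 [u3 hX1]]]] := evenEx (hpar true _ pX1).
have [v0 [v1 [v2 [v3 hX2]]]] := evenEx (hpar true _ pX2).
have [w0 [w1 [w2 [w3 hX3]]]] := evenEx (hpar true _ pX3).
have [? ?] : y2 = 0 /\ y3 = 0.
    have E := hev eW1 eW1 pW1.
  have m : mulJ delta eW1 eW1 = jI 1 by jnorm; jfin.
  rewrite m h1 hW1 in E; jnormH E; move/J8inj: E => [[e0 e1 e2 e3] [e4 e5 e6 e7]].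
  split; [(apply: (eqf2 char2 (K:=1) e7); cfin) | (apply: (eqf2 char2 (K:=1) e6); cfin)].
have [? ?] : z1 = 0 /\ z3 = 0.
  have E := hev eW2 eW2 pW2.
  have m : mulJ delta eW2 eW2 = jI 1 by jnorm; jfin.
  rewrite m h1 hW2 in E; jnormH E; move/J8inj: E => [[e0 e1 e2 e3] [e4 e5 e6 e7]].
  split; [(apply: (eqf2 char2 (K:=-1) e7); cfin) | (apply: (eqf2 char2 (K:=-1) e5); cfin)].
have [? ?] : t1 = 0 /\ t2 = 0.
  have E := hev eW3 eW3 pW3.
  have m : mulJ delta eW3 eW3 = - jI 1 by jnorm; jfin.
  rewrite m hn h1 hW3 in E; jnormH E; move/J8inj: E => [[e0 e1 e2 e3] [e4 e5 e6 e7]].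
  split; [(apply: (eqf2 char2 (K:=-1) e6); cfin) | (apply: (eqf2 char2 (K:=1) e5); cfin)].
subst.
have ? : z2 = y1.
  have E := hev eW1 eW2 pW1.
  have m : mulJ delta eW1 eW2 = 0 by jnorm; jfin.
  rewrite m h0 hW1 hW2 in E; jnormH E; move/J8inj: E => [[e0 e1 e2 e3] [e4 e5 e6 e7]].
  (apply: (eqf (K:=1) e7); cfin).
have ? : t3 = y1.
  have E := hev eW1 eW3 pW1.
  have m : mulJ delta eW1 eW3 = 0 by jnorm; jfin.
  rewrite m h0 hW1 hW3 in E; jnormH E; move/J8inj: E => [[e0 e1 e2 e3] [e4 e5 e6 e7]].
  (apply: (eqf (K:=1) e6); cfin).
subst.
have [? ?] : c0 = - y1 /\ c1 = - delta y0.
  have E := hev eW1 eX pW1.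
  have m : mulJ delta eW1 eX = 0 by jnorm; jfin.
  rewrite m h0 hW1 hX in E; jnormH E; move/J8inj: E => [[e0 e1 e2 e3] [e4 e5 e6 e7]].
  split; [(apply: (eqf (K:=-1) e1); cfin) | (apply: (eqf (K:=-1) e0); cfin)].
have ? : c2 = - delta z0.
  have E := hev eW2 eX pW2.
  have m : mulJ delta eW2 eX = 0 by jnorm; jfin.
  rewrite m h0 hW2 hX in E; jnormH E; move/J8inj: E => [[e0 e1 e2 e3] [e4 e5 e6 e7]].
  (apply: (eqf (K:=-1) e0); cfin).
have ? : c3 = delta t0.
  have E := hev eW3 eX pW3.
  have m : mulJ delta eW3 eX = 0 by jnorm; jfin.
  rewrite m h0 hW3 hX in E; jnormH E; move/J8inj: E => [[e0 e1 e2 e3] [e4 e5 e6 e7]].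
  (apply: (eqf (K:=1) e0); cfin).
subst.
have hal1 : forall g, al1 g = y0 * delta g.
  move=> g; have E := hev eW1 (mulJ delta (jI g) eX) pW1.
  have m : mulJ delta eW1 (mulJ delta (jI g) eX) = 0 by jnorm; jfin.
  rewrite m h0 (hev (jI g) eX (parI g)) hW1 hI hX in E.
  jnormH E; move/J8inj: E => [[e0 e1 e2 e3] [e4 e5 e6 e7]].
  (apply: (eqf (K:=-1) e0); cfin).
have hal2 : forall g, al2 g = z0 * delta g.
  move=> g; have E := hev eW2 (mulJ delta (jI g) eX) pW2.
  have m : mulJ delta eW2 (mulJ delta (jI g) eX) = 0 by jnorm; jfin.
  rewrite m h0 (hev (jI g) eX (parI g)) hW2 hI hX in E.
  jnormH E; move/J8inj: E => [[e0 e1 e2 e3] [e4 e5 e6 e7]].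
  (apply: (eqf (K:=-1) e0); cfin).
have hal3 : forall g, al3 g = - t0 * delta g.
  move=> g; have E := hev eW3 (mulJ delta (jI g) eX) pW3.
  have m : mulJ delta eW3 (mulJ delta (jI g) eX) = 0 by jnorm; jfin.
  rewrite m h0 (hev (jI g) eX (parI g)) hW3 hI hX in E.
  jnormH E; move/J8inj: E => [[e0 e1 e2 e3] [e4 e5 e6 e7]].
  (apply: (eqf (K:=1) e0); cfin).
have hal0 : forall f, al0 f = 0.
  move=> f; apply: (killZ ZdZ) => g.
  have e : mulJ delta (jI f) (mulJ delta (jI g) eW1) = mulJ delta (jI (f * g)) eW1 by jnorm; jfin.
  have E := hev (jI f) (mulJ delta (jI g) eW1) (parI f).
  rewrite e (hev (jI (f * g)) eW1 (parI _)) (hev (jI g) eW1 (parI g)) !hI hW1 !hal1 !hal2 !hal3 in E.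
  jnormH E; move/J8inj: E => [[e0 e1 e2 e3] [e4 e5 e6 e7]].
  (apply: (eqf (K:=-1) e5); cfin).
have hx1 : forall g, delta g * (u0 - y0) = 0 /\ delta g * (u1 - 0) = 0 /\
                     delta g * (u2 - t0) = 0 /\ delta g * (u3 + z0) = 0.
  move=> g.
  have mG : mulJ delta (jI g) eW1 = mkJ 0 g 0 0 0 0 0 0 by jnorm; jfin.
  have e : mulJ delta (mkJ 0 g 0 0 0 0 0 0) eX = mulJ delta (jI (delta g)) eX1 by jnorm; jfin.
  have E := hev (mkJ 0 g 0 0 0 0 0 0) eX (erefl _).
  rewrite e (hev (jI (delta g)) eX1 (parI _)) -mG (hev (jI g) eW1 (parI g)) !hI hW1 hX hX1 !hal0 !hal1 !hal2 !hal3 in E.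
  jnormH E; move/J8inj: E => [[e0 e1 e2 e3] [e4 e5 e6 e7]].
  split; [(apply: (eqf (K:=1) e0); cfin) | split; [(apply: (eqf (K:=1) e1); cfin) | split; [(apply: (eqf (K:=1) e2); cfin) | (apply: (eqf (K:=1) e3); cfin)]]].
have hx2 : forall g, delta g * (v0 - z0) = 0 /\ delta g * (v1 + t0) = 0 /\
                     delta g * (v2 - 0) = 0 /\ delta g * (v3 - y0) = 0.
  move=> g.
  have mG : mulJ delta (jI g) eW2 = mkJ 0 0 g 0 0 0 0 0 by jnorm; jfin.
  have e : mulJ delta (mkJ 0 0 g 0 0 0 0 0) eX = mulJ delta (jI (delta g)) eX2 by jnorm; jfin.
  have E := hev (mkJ 0 0 g 0 0 0 0 0) eX (erefl _).
  rewrite e (hev (jI (delta g)) eX2 (parI _)) -mG (hev (jI g) eW2 (parI g)) !hI hW2 hX hX2 !hal0 !hal1 !hal2 !hal3 in E.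
  jnormH E; move/J8inj: E => [[e0 e1 e2 e3] [e4 e5 e6 e7]].
  split; [(apply: (eqf (K:=1) e0); cfin) | split; [(apply: (eqf (K:=1) e1); cfin) | split; [(apply: (eqf (K:=1) e2); cfin) | (apply: (eqf (K:=1) e3); cfin)]]].
have hx3 : forall g, delta g * (w0 - t0) = 0 /\ delta g * (w1 + z0) = 0 /\
                     delta g * (w2 - y0) = 0 /\ delta g * (w3 - 0) = 0.
  move=> g.
  have mG : mulJ delta (jI g) eW3 = mkJ 0 0 0 g 0 0 0 0 by jnorm; jfin.
  have e : mulJ delta (mkJ 0 0 0 g 0 0 0 0) eX = mulJ delta (jI (delta g)) eX3 by jnorm; jfin.
  have E := hev (mkJ 0 0 0 g 0 0 0 0) eX (erefl _).
  rewrite e (hev (jI (delta g)) eX3 (parI _)) -mG (hev (jI g) eW3 (parI g)) !hI hW3 hX hX3 !hal0 !hal1 !hal2 !hal3 in E.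
  jnormH E; move/J8inj: E => [[e0 e1 e2 e3] [e4 e5 e6 e7]].
  split; [(apply: (eqf (K:=1) e0); cfin) | split; [(apply: (eqf (K:=1) e1); cfin) | split; [(apply: (eqf (K:=1) e2); cfin) | (apply: (eqf (K:=1) e3); cfin)]]].
have kl (a b : Z) : (forall g, delta g * (a - b) = 0) -> a = b.
  by move=> h; apply/eqP; rewrite -subr_eq0; apply/eqP; apply: (killZ ZdZ).
have ? : u0 = y0 by apply: kl => g; case: (hx1 g).
have ? : u1 = 0 by apply: kl => g; case: (hx1 g) => _ [].
have ? : u2 = t0 by apply: kl => g; case: (hx1 g) => _ [_ []].
have ? : u3 = - z0 by apply: kl => g; rewrite opprK; case: (hx1 g) => _ [_ [_]].
have ? : v0 = z0 by apply: kl => g; case: (hx2 g).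
have ? : v1 = - t0 by apply: kl => g; rewrite opprK; case: (hx2 g) => _ [].
have ? : v2 = 0 by apply: kl => g; case: (hx2 g) => _ [_ []].
have ? : v3 = y0 by apply: kl => g; case: (hx2 g) => _ [_ [_]].
have ? : w0 = t0 by apply: kl => g; case: (hx3 g).
have ? : w1 = - z0 by apply: kl => g; rewrite opprK; case: (hx3 g) => _ [].
have ? : w2 = y0 by apply: kl => g; case: (hx3 g) => _ [_ []].
have ? : w3 = 0 by apply: kl => g; case: (hx3 g) => _ [_ [_]].
subst.
rewrite hW1 hW2 hW3 /=.
apply: (agree delta_add delta_mul hs (@Dodd_sder F Z delta delta_add delta_scale delta_mul _ _ _ _)).
- by move=> f; rewrite hI hal0 hal1 hal2 hal3; jnorm; jfin.
- by rewrite hW1; jnorm; jfin.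
- by rewrite hW2; jnorm; jfin.
- by rewrite hW3; jnorm; jfin.
- by rewrite hX; jnorm; jfin.
- by rewrite hX1; jnorm; jfin.
- by rewrite hX2; jnorm; jfin.
- by rewrite hX3; jnorm; jfin.
Qed.

End Odd.

End MC4.
Import MC4.

Module MD.
Import GRing.Theory.
Local Open Scope ring_scope.
Import GRing.Theory.
Set Implicit Arguments. Unset Strict Implicit. Unset Printing Implicit Defensive.
Local Open Scope ring_scope.
Arguments Dodd {F Z}.
Section DopS.
Variables (F : fieldType) (Z : comAlgType F) (delta : Z -> Z).
Definition ZrtZ4 := @Zrt F Z.
Add Ring Zr : ZrtZ4.
Ltac zring := apply: zeqI; rewrite -[LHS]add0r -[RHS]add0r ?zE1 ?zE2 ?zE3 ?zE4 ?zE5; ring.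
Hypothesis delta_add : forall f g : Z, delta (f + g) = delta f + delta g.
Hypothesis delta_scale : forall (c : F) (f : Z), delta (c *: f) = c *: delta f.
Hypothesis delta_mul : forall f g : Z, delta (f * g) = delta f * g + f * delta g.
Let dlt0 : delta 0 = 0 := @delta0 F Z delta delta_add.
Let dltopp f : delta (- f) = - delta f := @delta_opp F Z delta delta_scale f.
Let dlt1 : delta 1 = 0 := @delta1 F Z delta delta_mul.
Ltac dexp := repeat progress rewrite ?delta_add ?dltopp ?delta_mul ?delta_scale ?dlt0 ?dlt1.
Ltac jnorm := cbv beta iota zeta delta [mulJ mkJ je0 je1 je2 je3 jo0 jo1 jo2 jo3 fst snd jI eW1 eW2 eW3 eX eX1 eX2 eX3 Dodd];
  rewrite ?zeroJE ?addJE ?scaleJE ?oppJE /=.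
Ltac jnormH H := cbv beta iota zeta delta [mulJ mkJ je0 je1 je2 je3 jo0 jo1 jo2 jo3 fst snd jI eW1 eW2 eW3 eX eX1 eX2 eX3 Dodd] in H;
  rewrite ?zeroJE ?addJE ?scaleJE ?oppJE /= in H.
Ltac cfin := dexp; rewrite ?scE; zring.
Ltac jfin := repeat (apply: pairP); cfin.

Lemma Dop_eo (a b c : JCK Z) : parJ false a -> parJ true b ->
  Dop (mulJ delta) false a true b c =
  Dodd delta (- delta (je0 a) * jo0 b - je1 a * jo1 b - je2 a * jo2 b + je3 a * jo3 b)
    (- je1 a * jo0 b) (- je2 a * jo0 b) (je3 a * jo0 b) c.
Proof.
case: a => [[[[a0 a1] a2] a3] [[[b0 b1] b2] b3]].
case: b => [[[[c0 c1] c2] c3] [[[d0 d1] d2] d3]].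
case: c => [[[[e0 e1] e2] e3] [[[f0 f1] f2] f3]].
rewrite /parJ /= ?zero4E => -[-> -> -> ->] -[-> -> -> ->].
rewrite /Dop /= expr0 scale1r; jnorm; jfin.
Qed.

Lemma Dop_oe (a b c : JCK Z) : parJ true a -> parJ false b ->
  Dop (mulJ delta) true a false b c =
  Dodd delta (delta (je0 b) * jo0 a + je1 b * jo1 a + je2 b * jo2 a - je3 b * jo3 a)
    (je1 b * jo0 a) (je2 b * jo0 a) (- je3 b * jo0 a) c.
Proof.
case: a => [[[[a0 a1] a2] a3] [[[b0 b1] b2] b3]].
case: b => [[[[c0 c1] c2] c3] [[[d0 d1] d2] d3]].
case: c => [[[[e0 e1] e2] e3] [[[f0 f1] f2] f3]].
rewrite /parJ /= ?zero4E => -[-> -> -> ->] -[-> -> -> ->].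
rewrite /Dop /= expr0 scale1r; jnorm; jfin.
Qed.
End DopS.

End MD.
Import MD.

Module ME.
Import GRing.Theory.
Local Open Scope ring_scope.
Import GRing.Theory.
Set Implicit Arguments. Unset Strict Implicit. Unset Printing Implicit Defensive.
Local Open Scope ring_scope.
Arguments Dodd {F Z}.
Section EvenS.
Variables (F : fieldType) (Z : comAlgType F) (delta : Z -> Z).
Definition ZrtZ5 := @Zrt F Z.
Add Ring Zr : ZrtZ5.
Ltac zring := apply: zeqI; rewrite -[LHS]add0r -[RHS]add0r ?zE1 ?zE2 ?zE3 ?zE4 ?zE5; ring.
Hypothesis delta_add : forall f g : Z, delta (f + g) = delta f + delta g.
Hypothesis delta_scale : forall (c : F) (f : Z), delta (c *: f) = c *: delta f.
Hypothesis delta_mul : forall f g : Z, delta (f * g) = delta f * g + f * delta g.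
Let dlt0 : delta 0 = 0 := @delta0 F Z delta delta_add.
Let dltopp f : delta (- f) = - delta f := @delta_opp F Z delta delta_scale f.
Let dlt1 : delta 1 = 0 := @delta1 F Z delta delta_mul.
Ltac dexp := repeat progress rewrite ?delta_add ?dltopp ?delta_mul ?delta_scale ?dlt0 ?dlt1.
Ltac jnorm := cbv beta iota zeta delta [mulJ mkJ je0 je1 je2 je3 jo0 jo1 jo2 jo3 fst snd jI eW1 eW2 eW3 eX eX1 eX2 eX3 Dodd];
  rewrite ?zeroJE ?addJE ?scaleJE ?oppJE /=.
Ltac jnormH H := cbv beta iota zeta delta [mulJ mkJ je0 je1 je2 je3 jo0 jo1 jo2 jo3 fst snd jI eW1 eW2 eW3 eX eX1 eX2 eX3 Dodd] in H;
  rewrite ?zeroJE ?addJE ?scaleJE ?oppJE /= in H.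
Ltac cfin := dexp; rewrite ?scE; zring.
Ltac jfin := repeat (apply: pairP); cfin.

Definition Dev (phi : Z -> Z) (r : Z) (u : JCK Z) : JCK Z :=
  mkJ (phi (je0 u)) (phi (je1 u)) (phi (je2 u)) (phi (je3 u))
      (phi (jo0 u) + jo0 u * r) (phi (jo1 u) - jo1 u * r)
      (phi (jo2 u) - jo2 u * r) (phi (jo3 u) - jo3 u * r).

Section DevS.
Variables (phi : Z -> Z) (r : Z).
Hypothesis padd : forall f g, phi (f + g) = phi f + phi g.
Hypothesis pscale : forall (c : F) f, phi (c *: f) = c *: phi f.
Hypothesis pmul : forall f g, phi (f * g) = phi f * g + f * phi g.
Hypothesis pdel : forall f, phi (delta f) = delta (phi f) + r * delta f + r * delta f.
Let p0 : phi 0 = 0.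
Proof. by apply: (@addrI _ (phi 0)); rewrite -padd !addr0. Qed.
Let popp f : phi (- f) = - phi f.
Proof. by rewrite -scaleN1r pscale scaleN1r. Qed.
Let p1 : phi 1 = 0.
Proof. by apply: (@addrI _ (phi 1)); rewrite addr0 -{1}[phi 1]mulr1 -{2}[phi 1]mul1r -pmul mulr1. Qed.
Ltac pexp := repeat progress rewrite ?delta_add ?dltopp ?delta_mul ?delta_scale ?dlt0 ?dlt1
   ?padd ?popp ?pmul ?pscale ?p0 ?p1 ?pdel.
Ltac pfin := pexp; rewrite ?scE; zring.

Lemma Dev_sder : sder (mulJ delta) (@parJ F Z) false (Dev phi r).
Proof.
split.
- move=> c [[[[a0 a1] a2] a3] [[[b0 b1] b2] b3]] [[[[c0 c1] c2] c3] [[[e0 e1] e2] e3]].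
  rewrite /Dev; jnorm; repeat (apply: pairP); pfin.
- move=> [] [[[[a0 a1] a2] a3] [[[b0 b1] b2] b3]]; rewrite /parJ /= ?zero4E => -[-> -> -> ->];
  rewrite /Dev; jnorm; repeat (apply: pairP); pfin.
- move=> [] [[[[a0 a1] a2] a3] [[[b0 b1] b2] b3]] [[[[c0 c1] c2] c3] [[[e0 e1] e2] e3]];
  rewrite /parJ /= ?zero4E => -[-> -> -> ->];
  rewrite /Dev /= expr0 scale1r; jnorm; repeat (apply: pairP); pfin.
Qed.
End DevS.

Hypothesis char2 : (2%:R : F) != 0.
Hypothesis ZdZ : forall z : Z, exists s : seq (Z * Z), z = \sum_(p <- s) p.1 * delta p.2.
Ltac seq1 h := first [idtac "TRY eqf 1" h; apply: (eqf (K:=1) h); cfin | idtac "TRY eqf -1" h; apply: (eqf (K:=-1) h); cfin].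
Ltac seq2 h := first [idtac "TRY eqf2 1" h; apply: (eqf2 char2 (K:=1) h); cfin | idtac "TRY eqf2 -1" h; apply: (eqf2 char2 (K:=-1) h); cfin].
Ltac seqx x := idtac "GOAL"; first [cfin; idtac "TRY direct" | match goal with h : ?A = ?B |- _ => lazymatch type of h with context[x] => seq1 h end end].
Ltac seqx2 x := idtac "GOAL"; match goal with h : ?A = ?B |- _ => lazymatch type of h with context[x] => seq2 h end end.

Lemma even_char D : sder (mulJ delta) (@parJ F Z) false D ->
  (forall f, [/\ je1 (D (jI f)) = 0, je2 (D (jI f)) = 0 & je3 (D (jI f)) = 0]) ->
  [/\ je0 (D eW1) = 0, je2 (D eW1) = 0 & je3 (D eW1) = 0] ->
  [/\ je0 (D eW2) = 0, je1 (D eW2) = 0 & je3 (D eW2) = 0] ->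
  [/\ je0 (D eW3) = 0, je1 (D eW3) = 0 & je2 (D eW3) = 0] ->
  [/\ jo1 (D eX) = 0, jo2 (D eX) = 0 & jo3 (D eX) = 0] ->
  [/\ jo0 (D eX1) = 0, jo2 (D eX1) = 0 & jo3 (D eX1) = 0] ->
  [/\ jo0 (D eX2) = 0, jo1 (D eX2) = 0 & jo3 (D eX2) = 0] ->
  [/\ jo0 (D eX3) = 0, jo1 (D eX3) = 0 & jo2 (D eX3) = 0] ->
  exists phi r, [/\ (forall f g, phi (f + g) = phi f + phi g),
     (forall (c : F) f, phi (c *: f) = c *: phi f),
     (forall f g, phi (f * g) = phi f * g + f * phi g),
     (forall f, phi (delta f) = delta (phi f) + r * delta f + r * delta f)
   & forall u, D u = Dev phi r u].
Proof.
move=> hs gI gW1 gW2 gW3 gX gX1 gX2 gX3.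
have [ha h0 hn hsc] := sder_lin hs.
have [_ hpar hD] := hs.
have hev q a b : parJ q a -> D (mulJ delta a b) = mulJ delta (D a) b + mulJ delta a (D b).
  by move=> hq; rewrite (hD q a b hq) /= expr0 scale1r.
have pX : parJ true (@eX F Z) by [].
have pW1 : parJ false (@eW1 F Z) by [].
have pW2 : parJ false (@eW2 F Z) by [].
have pW3 : parJ false (@eW3 F Z) by [].
have pX1 : parJ true (@eX1 F Z) by [].
have pX2 : parJ true (@eX2 F Z) by [].
have pX3 : parJ true (@eX3 F Z) by [].
have [phi hI] : exists phi, forall f, D (jI f) = mkJ (phi f) 0 0 0 0 0 0 0.
  exists (fun f => je0 (D (jI f))) => f.
  by rewrite {1}(evenE (hpar false _ (parI f))); case: (gI f) => -> -> ->.
have [t1 hW1] : exists t, D eW1 = mkJ 0 t 0 0 0 0 0 0.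
  exists (je1 (D eW1)); rewrite {1}(evenE (hpar false _ pW1)).
  by case: gW1 => -> -> ->.
have [t2 hW2] : exists t, D eW2 = mkJ 0 0 t 0 0 0 0 0.
  exists (je2 (D eW2)); rewrite {1}(evenE (hpar false _ pW2)).
  by case: gW2 => -> -> ->.
have [t3 hW3] : exists t, D eW3 = mkJ 0 0 0 t 0 0 0 0.
  exists (je3 (D eW3)); rewrite {1}(evenE (hpar false _ pW3)).
  by case: gW3 => -> -> ->.
have [r hX] : exists t, D eX = mkJ 0 0 0 0 t 0 0 0.
  exists (jo0 (D eX)); rewrite {1}(oddE (hpar true _ pX)).
  by case: gX => -> -> ->.
have [s1 hX1] : exists t, D eX1 = mkJ 0 0 0 0 0 t 0 0.
  exists (jo1 (D eX1)); rewrite {1}(oddE (hpar true _ pX1)).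
  by case: gX1 => -> -> ->.
have [s2 hX2] : exists t, D eX2 = mkJ 0 0 0 0 0 0 t 0.
  exists (jo2 (D eX2)); rewrite {1}(oddE (hpar true _ pX2)).
  by case: gX2 => -> -> ->.
have [s3 hX3] : exists t, D eX3 = mkJ 0 0 0 0 0 0 0 t.
  exists (jo3 (D eX3)); rewrite {1}(oddE (hpar true _ pX3)).
  by case: gX3 => -> -> ->.
have padd f g : phi (f + g) = phi f + phi g.
  have E := ha (jI f) (jI g).
  have m : jI f + jI g = jI (f + g) by jnorm; jfin.
  rewrite m !hI in E; jnormH E; move/J8inj: E => [[e0 e1 e2 e3] [e4 e5 e6 e7]].
  by rewrite e0.
have pscale (c : F) f : phi (c *: f) = c *: phi f.
  have E := hsc c (jI f).
  have m : c *: jI f = jI (c *: f) by jnorm; jfin.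
  rewrite m !hI in E; jnormH E; move/J8inj: E => [[e0 e1 e2 e3] [e4 e5 e6 e7]].
  by rewrite e0.
have pmul f g : phi (f * g) = phi f * g + f * phi g.
  have E := hev false (jI f) (jI g) (parI f).
  have m : mulJ delta (jI f) (jI g) = jI (f * g) by jnorm; jfin.
  rewrite m !hI in E; jnormH E; move/J8inj: E => [[e0 e1 e2 e3] [e4 e5 e6 e7]].
  apply: (eqf (K:=1) e0); cfin.
have p0 : phi 0 = 0 by apply: (@addrI _ (phi 0)); rewrite -padd !addr0.
have popp f : phi (- f) = - phi f by rewrite -scaleN1r pscale scaleN1r.
have p1 : phi 1 = 0.
  by apply: (@addrI _ (phi 1)); rewrite addr0 -{1}[phi 1]mulr1 -{2}[phi 1]mul1r -pmul mulr1.
have pdel f : phi (delta f) = delta (phi f) + r * delta f + r * delta f.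
  have E := hev true eX (mkJ 0 0 0 0 f 0 0 0) pX.
  have m : mulJ delta eX (mkJ 0 0 0 0 f 0 0 0) = jI (- delta f) by jnorm; jfin.
  have mg : mulJ delta (jI f) eX = mkJ 0 0 0 0 f 0 0 0 by jnorm; jfin.
  rewrite m -mg (hev false (jI f) eX (parI f)) !hI hX popp in E.
  jnormH E; move/J8inj: E => [[e0 e1 e2 e3] [e4 e5 e6 e7]].
  apply: (eqf (K:=-1) e0); cfin.
have ? : t1 = 0.
  have E := hev false eW1 eW1 pW1.
  have m : mulJ delta eW1 eW1 = jI 1 by jnorm; jfin.
  rewrite m hI p1 hW1 in E; jnormH E; move/J8inj: E => [[e0 e1 e2 e3] [e4 e5 e6 e7]].
  apply: (eqf2 char2 (K:=-1) e0); cfin.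
have ? : t2 = 0.
  have E := hev false eW2 eW2 pW2.
  have m : mulJ delta eW2 eW2 = jI 1 by jnorm; jfin.
  rewrite m hI p1 hW2 in E; jnormH E; move/J8inj: E => [[e0 e1 e2 e3] [e4 e5 e6 e7]].
  apply: (eqf2 char2 (K:=-1) e0); cfin.
have ? : t3 = 0.
  have E := hev false eW3 eW3 pW3.
  have m : mulJ delta eW3 eW3 = jI (- 1) by jnorm; jfin.
  rewrite m hI popp p1 hW3 in E; jnormH E; move/J8inj: E => [[e0 e1 e2 e3] [e4 e5 e6 e7]].
  apply: (eqf2 char2 (K:=1) e0); cfin.
subst.
have kl (a b : Z) : (forall g, delta g * (a - b) = 0) -> a = b.
  by move=> h; apply/eqP; rewrite -subr_eq0; apply/eqP; apply: (killZ ZdZ).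
have ? : s1 = - r.
  apply: kl => f.
  have mG : mulJ delta (jI f) eW1 = mkJ 0 f 0 0 0 0 0 0 by jnorm; jfin.
  have e : mulJ delta (mkJ 0 f 0 0 0 0 0 0) eX = mulJ delta (jI (delta f)) eX1 by jnorm; jfin.
  have pG : parJ false (mkJ 0 f 0 0 0 0 0 0) by [].
  have E := hev false (mkJ 0 f 0 0 0 0 0 0) eX pG.
  rewrite e (hev false (jI (delta f)) eX1 (parI _)) -mG (hev false (jI f) eW1 (parI f)) !hI hW1 hX hX1 pdel in E.
  jnormH E; move/J8inj: E => [[e0 e1 e2 e3] [e4 e5 e6 e7]].
  apply: (eqf (K:=1) e5); cfin.
have ? : s2 = - r.
  apply: kl => f.
  have mG : mulJ delta (jI f) eW2 = mkJ 0 0 f 0 0 0 0 0 by jnorm; jfin.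
  have e : mulJ delta (mkJ 0 0 f 0 0 0 0 0) eX = mulJ delta (jI (delta f)) eX2 by jnorm; jfin.
  have pG : parJ false (mkJ 0 0 f 0 0 0 0 0) by [].
  have E := hev false (mkJ 0 0 f 0 0 0 0 0) eX pG.
  rewrite e (hev false (jI (delta f)) eX2 (parI _)) -mG (hev false (jI f) eW2 (parI f)) !hI hW2 hX hX2 pdel in E.
  jnormH E; move/J8inj: E => [[e0 e1 e2 e3] [e4 e5 e6 e7]].
  apply: (eqf (K:=1) e6); cfin.
have ? : s3 = - r.
  apply: kl => f.
  have mG : mulJ delta (jI f) eW3 = mkJ 0 0 0 f 0 0 0 0 by jnorm; jfin.
  have e : mulJ delta (mkJ 0 0 0 f 0 0 0 0) eX = mulJ delta (jI (delta f)) eX3 by jnorm; jfin.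
  have pG : parJ false (mkJ 0 0 0 f 0 0 0 0) by [].
  have E := hev false (mkJ 0 0 0 f 0 0 0 0) eX pG.
  rewrite e (hev false (jI (delta f)) eX3 (parI _)) -mG (hev false (jI f) eW3 (parI f)) !hI hW3 hX hX3 pdel in E.
  jnormH E; move/J8inj: E => [[e0 e1 e2 e3] [e4 e5 e6 e7]].
  apply: (eqf (K:=1) e7); cfin.
subst.
exists phi, r; split => //.
apply: (agree delta_add delta_mul hs (Dev_sder padd pscale pmul pdel)).
- by move=> f; rewrite hI /Dev; jnorm; rewrite p0; jfin.
- by rewrite hW1 /Dev; jnorm; rewrite ?p0 ?p1; jfin.
- by rewrite hW2 /Dev; jnorm; rewrite ?p0 ?p1; jfin.
- by rewrite hW3 /Dev; jnorm; rewrite ?p0 ?p1; jfin.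
- by rewrite hX /Dev; jnorm; rewrite ?p0 ?p1; jfin.
- by rewrite hX1 /Dev; jnorm; rewrite ?p0 ?p1; jfin.
- by rewrite hX2 /Dev; jnorm; rewrite ?p0 ?p1; jfin.
- by rewrite hX3 /Dev; jnorm; rewrite ?p0 ?p1; jfin.
Qed.
End EvenS.

End ME.
Import ME.

Module MF.
Import GRing.Theory.
Local Open Scope ring_scope.
Import GRing.Theory.
Set Implicit Arguments. Unset Strict Implicit. Unset Printing Implicit Defensive.
Local Open Scope ring_scope.
Arguments Dodd {F Z}.
Section KS0.
Variables (F : fieldType) (Z : comAlgType F).
Lemma addKE (a b c d : Z) : ((a, b) : KCK Z) + (c, d) = (a + c, b + d). Proof. by []. Qed.
Lemma scaleKE (k : F) (a b : Z) : k *: ((a, b) : KCK Z) = (k *: a, k *: b). Proof. by []. Qed.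
Lemma zeroKE : (0 : KCK Z) = (0, 0). Proof. by []. Qed.
Lemma pair0 (a b : Z) : (a, b) = 0 -> a = 0 /\ b = 0. Proof. by case. Qed.
End KS0.
Section FS.
Variables (F : fieldType) (Z : comAlgType F) (delta : Z -> Z).
Definition ZrtZ7 := @Zrt F Z.
Add Ring Zr : ZrtZ7.
Ltac zring := apply: zeqI; rewrite -[LHS]add0r -[RHS]add0r ?zE1 ?zE2 ?zE3 ?zE4 ?zE5; ring.
Hypothesis delta_add : forall f g : Z, delta (f + g) = delta f + delta g.
Hypothesis delta_scale : forall (c : F) (f : Z), delta (c *: f) = c *: delta f.
Hypothesis delta_mul : forall f g : Z, delta (f * g) = delta f * g + f * delta g.
Let dlt0 : delta 0 = 0 := @delta0 F Z delta delta_add.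
Let dltopp f : delta (- f) = - delta f := @delta_opp F Z delta delta_scale f.
Let dlt1 : delta 1 = 0 := @delta1 F Z delta delta_mul.
Ltac dexp := repeat progress rewrite ?delta_add ?dltopp ?delta_mul ?delta_scale ?dlt0 ?dlt1.
Ltac jnorm := cbv beta iota zeta delta [mulJ mkJ je0 je1 je2 je3 jo0 jo1 jo2 jo3 fst snd jI eW1 eW2 eW3 eX eX1 eX2 eX3 Dodd];
  rewrite ?zeroJE ?addJE ?scaleJE ?oppJE /=.
Ltac jnormH H := cbv beta iota zeta delta [mulJ mkJ je0 je1 je2 je3 jo0 jo1 jo2 jo3 fst snd jI eW1 eW2 eW3 eX eX1 eX2 eX3 Dodd] in H;
  rewrite ?zeroJE ?addJE ?scaleJE ?oppJE /= in H.
Ltac cfin := dexp; rewrite ?scE; zring.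
Ltac jfin := repeat (apply: pairP); cfin.
Ltac knorm := rewrite /mulK /=; rewrite ?zeroKE ?addKE ?scaleKE /=.

Lemma DoddD (c : F) q p1 p2 p3 q' p1' p2' p3' u :
  c *: Dodd delta q p1 p2 p3 u + Dodd delta q' p1' p2' p3' u =
  Dodd delta (c *: q + q') (c *: p1 + p1') (c *: p2 + p2') (c *: p3 + p3') u.
Proof. case: u => [[[[a0 a1] a2] a3] [[[b0 b1] b2] b3]]; jnorm; jfin. Qed.

Lemma Dodd0 u : Dodd delta 0 0 0 0 u = 0.
Proof. case: u => [[[[a0 a1] a2] a3] [[[b0 b1] b2] b3]]; jnorm; jfin. Qed.

Lemma mulJD2 (a x y : JCK Z) : mulJ delta a (x + y) = mulJ delta a x + mulJ delta a y.
Proof.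
case: a => [[[[a0 a1] a2] a3] [[[b0 b1] b2] b3]].
case: x => [[[[c0 c1] c2] c3] [[[e0 e1] e2] e3]].
case: y => [[[[f0 f1] f2] f3] [[[g0 g1] g2] g3]].
jnorm; jfin.
Qed.

Lemma DopD p a q b (x y : JCK Z) :
  Dop (mulJ delta) p a q b (x + y) = Dop (mulJ delta) p a q b x + Dop (mulJ delta) p a q b y.
Proof. by rewrite /Dop !mulJD2 scalerDr opprD addrACA. Qed.

Lemma parM x y (u v : JCK Z) : parJ x u -> parJ y v -> parJ (x (+) y) (mulJ delta u v).
Proof.
case: u => [[[[a0 a1] a2] a3] [[[b0 b1] b2] b3]].
case: v => [[[[c0 c1] c2] c3] [[[e0 e1] e2] e3]].
case: x; case: y; rewrite /parJ /= ?zero4E => -[-> -> -> ->] -[-> -> -> ->];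
  jnorm; rewrite ?zero4E; jfin.
Qed.

Lemma parD r (u v : JCK Z) : parJ r u -> parJ r v -> parJ r (u + v).
Proof. by case: r; rewrite /parJ /= => -> ->; rewrite addr0. Qed.
Lemma parZ r (c : F) (u : JCK Z) : parJ r u -> parJ r (c *: u).
Proof. by case: r; rewrite /parJ /= => ->; rewrite scaler0. Qed.
Lemma parN r (u : JCK Z) : parJ r u -> parJ r (- u).
Proof. by case: r; rewrite /parJ /= => ->; rewrite oppr0. Qed.
Lemma par0 r : parJ r (0 : JCK Z).
Proof. by case: r. Qed.
Lemma parTF (u : JCK Z) : parJ true u -> parJ false u -> u = 0.
Proof. by case: u => u1 u2; rewrite /parJ /= => -> ->. Qed.

Lemma parDop r p a b c : parJ p a -> parJ p b -> parJ r c ->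
  parJ r (Dop (mulJ delta) p a p b c).
Proof.
move=> ha hb hc; rewrite /Dop.
have e : r = p (+) (p (+) r) by rewrite addbA addbb.
apply: parD; last apply/parN/parZ; rewrite {1}e; apply: parM => //; exact: parM.
Qed.

Lemma splitJ (c : JCK Z) : c = mkJ (je0 c) (je1 c) (je2 c) (je3 c) 0 0 0 0 +
   mkJ 0 0 0 0 (jo0 c) (jo1 c) (jo2 c) (jo3 c).
Proof. case: c => [[[[a0 a1] a2] a3] [[[b0 b1] b2] b3]]; jnorm; jfin. Qed.

Lemma sder_ext p (D D' : JCK Z -> JCK Z) : (forall u, D u = D' u) ->
  sder (mulJ delta) (@parJ F Z) p D' -> sder (mulJ delta) (@parJ F Z) p D.
Proof.
move=> e [h1 h2 h3]; split.
- by move=> c u v; rewrite !e h1.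
- by move=> q u hu; rewrite e; apply: h2.
- by move=> q a b ha; rewrite !e; apply: h3.
Qed.

Section DevKS.
Variables (phi : Z -> Z) (r : Z).
Hypothesis padd : forall f g, phi (f + g) = phi f + phi g.
Hypothesis pscale : forall (c : F) f, phi (c *: f) = c *: phi f.
Hypothesis pmul : forall f g, phi (f * g) = phi f * g + f * phi g.
Hypothesis pdel : forall f, phi (delta f) = delta (phi f) + r * delta f + r * delta f.
Let p0 : phi 0 = 0.
Proof. by apply: (@addrI _ (phi 0)); rewrite -padd !addr0. Qed.
Let popp f : phi (- f) = - phi f.
Proof. by rewrite -scaleN1r pscale scaleN1r. Qed.
Let p1 : phi 1 = 0.
Proof. by apply: (@addrI _ (phi 1)); rewrite addr0 -{1}[phi 1]mulr1 -{2}[phi 1]mul1r -pmul mulr1. Qed.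
Ltac pexp := repeat progress rewrite ?delta_add ?dltopp ?delta_mul ?delta_scale ?dlt0 ?dlt1
   ?padd ?popp ?pmul ?pscale ?p0 ?p1 ?pdel.
Ltac pfin := pexp; rewrite ?scE; zring.

Lemma DevK_sder : sder (mulK delta) (@parK F Z) false (fun k => (phi k.1, phi k.2 + k.2 * r)).
Proof.
split.
- move=> c [a0 b0] [a1 b1]; knorm; repeat (apply: pairP); pfin.
- move=> [] [a0 b0]; rewrite /parK /= => ->; pfin.
- move=> [] [a0 b0] [a1 b1]; rewrite /parK /= => ->; rewrite /= expr0 scale1r;
  knorm; repeat (apply: pairP); pfin.
Qed.
End DevKS.

Lemma evenK_char d : sder (mulK delta) (@parK F Z) false d ->
  exists phi r, [/\ (forall f g, phi (f + g) = phi f + phi g),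
     (forall (c : F) f, phi (c *: f) = c *: phi f),
     (forall f g, phi (f * g) = phi f * g + f * phi g),
     (forall f, phi (delta f) = delta (phi f) + r * delta f + r * delta f)
   & forall k, d k = (phi k.1, phi k.2 + k.2 * r)].
Proof.
case=> hl hpar hD.
have pkE f : parK false ((f, 0) : KCK Z) by [].
have pkO f : parK true ((0, f) : KCK Z) by [].
have ha u v : d (u + v) = d u + d v by rewrite -{1}[u]scale1r hl scale1r.
have hsc c u : d (c *: u) = c *: d u.
  have h0 : d 0 = 0 by apply: (@addrI _ (d 0)); rewrite -ha !addr0.
  by rewrite -[c *: u]addr0 hl h0 addr0.
have hev q a b : parK q a -> d (mulK delta a b) = mulK delta (d a) b + mulK delta a (d b).
  by move=> hq; rewrite (hD q a b hq) /= expr0 scale1r.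
have [phi hI] : exists phi, forall f, d (f, 0) = (phi f, 0).
  exists (fun f => (d (f, 0)).1) => f.
  have := hpar false ((f, 0) : KCK Z) (pkE f); rewrite /parK /=.
  by case: (d (f, 0)) => a b /= ->.
have [r hx] : exists r, d (0, 1) = (0, r).
  exists (d (0, 1)).2.
  have := hpar true ((0, 1) : KCK Z) (pkO 1); rewrite /parK /=.
  by case: (d (0, 1)) => a b /= ->.
have hg g : d (0, g) = (0, phi g + g * r).
  have e : mulK delta (g, 0) (0, 1) = (0, g) by knorm; repeat (apply: pairP); cfin.
  rewrite -e (hev false _ _ (pkE g)) hI hx; knorm; repeat (apply: pairP); cfin.
have dE k : d k = (phi k.1, phi k.2 + k.2 * r).
  case: k => f g /=; have -> : d (f, g) = d (f, 0) + d (0, g) by rewrite -ha addKE addr0 add0r.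
  by rewrite hI hg addKE add0r addr0.
exists phi, r.
have padd f g : phi (f + g) = phi f + phi g.
  have := ha (f, 0) (g, 0); rewrite addKE addr0 !hI addKE => -[].
  by [].
have pscale (c : F) f : phi (c *: f) = c *: phi f.
  have := hsc c (f, 0); rewrite scaleKE scaler0 !hI scaleKE => -[].
  by [].
have pmul f g : phi (f * g) = phi f * g + f * phi g.
  have := hev false (f, 0) (g, 0) (pkE f).
  have e : mulK delta (f, 0) (g, 0) = (f * g, 0) by knorm; repeat (apply: pairP); cfin.
  rewrite e !hI; knorm => -[] h _.
  by apply: (eqf (K:=1) h); cfin.
split => //.
move=> f.
have := hev true (0, 1) (0, f) (pkO 1).
have e : mulK delta (0, 1) (0, f) = (- delta f, 0) by knorm; repeat (apply: pairP); cfin.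
have popp g : phi (- g) = - phi g by rewrite -scaleN1r pscale scaleN1r.
rewrite e hI hx hg popp; knorm => -[] h _.
first [apply: (eqf (K:=1) h); cfin | apply: (eqf (K:=-1) h); cfin].
Qed.
End FS.

End MF.
Import MF.

Module MG.
Import GRing.Theory.
Local Open Scope ring_scope.
Import GRing.Theory.
Set Implicit Arguments. Unset Strict Implicit. Unset Printing Implicit Defensive.
Local Open Scope ring_scope.
Arguments Dodd {F Z}.
Section Final.
Variables (F : fieldType) (Z : comAlgType F) (delta : Z -> Z).
Definition ZrtZ8 := @Zrt F Z.
Add Ring Zr : ZrtZ8.
Ltac zring := apply: zeqI; rewrite -[LHS]add0r -[RHS]add0r ?zE1 ?zE2 ?zE3 ?zE4 ?zE5; ring.
Hypothesis delta_add : forall f g : Z, delta (f + g) = delta f + delta g.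
Hypothesis delta_scale : forall (c : F) (f : Z), delta (c *: f) = c *: delta f.
Hypothesis delta_mul : forall f g : Z, delta (f * g) = delta f * g + f * delta g.
Let dlt0 : delta 0 = 0 := @delta0 F Z delta delta_add.
Let dltopp f : delta (- f) = - delta f := @delta_opp F Z delta delta_scale f.
Let dlt1 : delta 1 = 0 := @delta1 F Z delta delta_mul.
Ltac dexp := repeat progress rewrite ?delta_add ?dltopp ?delta_mul ?delta_scale ?dlt0 ?dlt1.
Ltac jnorm := cbv beta iota zeta delta [mulJ mkJ je0 je1 je2 je3 jo0 jo1 jo2 jo3 fst snd jI eW1 eW2 eW3 eX eX1 eX2 eX3 Dodd];
  rewrite ?zeroJE ?addJE ?scaleJE ?oppJE /=.
Ltac jnormH H := cbv beta iota zeta delta [mulJ mkJ je0 je1 je2 je3 jo0 jo1 jo2 jo3 fst snd jI eW1 eW2 eW3 eX eX1 eX2 eX3 Dodd] in H;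
  rewrite ?zeroJE ?addJE ?scaleJE ?oppJE /= in H.
Ltac cfin := dexp; rewrite ?scE; zring.
Ltac jfin := repeat (apply: pairP); cfin.
Hypothesis char2 : (2%:R : F) != 0.
Hypothesis ZdZ : forall z : Z, exists s : seq (Z * Z), z = \sum_(p <- s) p.1 * delta p.2.
Let oddc := odd_char delta_add delta_scale delta_mul char2 ZdZ.
Let Dsd := Dodd_sder F Z delta delta_add delta_scale delta_mul.

Lemma DoddZ (c : F) q p1 p2 p3 u :
  c *: Dodd delta q p1 p2 p3 u = Dodd delta (c *: q) (c *: p1) (c *: p2) (c *: p3) u.
Proof.
have := DoddD delta_add delta_scale c q p1 p2 p3 0 0 0 0 u.
by rewrite Dodd0 // !addr0.
Qed.

Lemma DoddSum (I : Type) (s : seq I) (Q : pred I) g0 g1 g2 g3 u :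
  \sum_(t <- s | Q t) Dodd delta (g0 t) (g1 t) (g2 t) (g3 t) u =
  Dodd delta (\sum_(t <- s | Q t) g0 t) (\sum_(t <- s | Q t) g1 t)
             (\sum_(t <- s | Q t) g2 t) (\sum_(t <- s | Q t) g3 t) u.
Proof.
elim: s => [|x s IH]; first by rewrite !big_nil Dodd0.
rewrite !big_cons; case: (Q x) => //.
by rewrite IH -[X in X + _]scale1r DoddD // !scale1r.
Qed.

Definition tq (t : F * (bool * JCK Z) * (bool * JCK Z)) : Z :=
  let a := t.1.2.2 in let b := t.2.2 in
  if t.1.2.1 then delta (je0 b) * jo0 a + je1 b * jo1 a + je2 b * jo2 a - je3 b * jo3 a
  else - delta (je0 a) * jo0 b - je1 a * jo1 b - je2 a * jo2 b + je3 a * jo3 b.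
Definition tp1 (t : F * (bool * JCK Z) * (bool * JCK Z)) : Z :=
  let a := t.1.2.2 in let b := t.2.2 in
  if t.1.2.1 then je1 b * jo0 a else - je1 a * jo0 b.
Definition tp2 (t : F * (bool * JCK Z) * (bool * JCK Z)) : Z :=
  let a := t.1.2.2 in let b := t.2.2 in
  if t.1.2.1 then je2 b * jo0 a else - je2 a * jo0 b.
Definition tp3 (t : F * (bool * JCK Z) * (bool * JCK Z)) : Z :=
  let a := t.1.2.2 in let b := t.2.2 in
  if t.1.2.1 then - je3 b * jo0 a else je3 a * jo0 b.

Lemma part1 D : odd_der (mulJ delta) (@parJ F Z) D <-> odd_inder (mulJ delta) (@parJ F Z) D.
Proof.
split.
- move=> hs; have hD := oddc hs.
  move: hD; set q := jo1 (D eW1); set p1 := jo0 (D eW1); set p2 := jo0 (D eW2);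
    set p3 := jo0 (D eW3) => hD.
  split.
  + exists [:: (1, (false, mkJ 0 (- p1) (- p2) p3 0 0 0 0), (true, eX));
             (1, (false, mkJ 0 (-1) 0 0 0 0 0 0), (true, mkJ 0 0 0 0 0 q 0 0))].
    split.
    * by move=> t; rewrite !inE => /orP [] /eqP -> .
    * move=> c; rewrite big_cons big_cons big_nil /= !scale1r addr0.
      rewrite !(Dop_eo delta_add delta_scale delta_mul) // hD; jnorm; jfin.
  + move=> qq u hu; have [_ hpar _] := hs.
    by move: (hpar qq u hu); rewrite addbT.
- case=> [[s [hsp hsD]] hodd].
  pose P (t : F * (bool * JCK Z) * (bool * JCK Z)) := t.1.2.1 == t.2.1.
  pose Ff (t : F * (bool * JCK Z) * (bool * JCK Z)) c :=
    t.1.1 *: Dop (mulJ delta) t.1.2.1 t.1.2.2 t.2.1 t.2.2 c.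
  pose Ec c := \sum_(t <- s | P t) Ff t c.
  pose Q := \sum_(t <- s | ~~ P t) t.1.1 *: tq t.
  pose P1 := \sum_(t <- s | ~~ P t) t.1.1 *: tp1 t.
  pose P2 := \sum_(t <- s | ~~ P t) t.1.1 *: tp2 t.
  pose P3 := \sum_(t <- s | ~~ P t) t.1.1 *: tp3 t.
  have hO c : \sum_(t <- s | ~~ P t) Ff t c = Dodd delta Q P1 P2 P3 c.
    rewrite /Q /P1 /P2 /P3 -DoddSum big_seq_cond [RHS]big_seq_cond.
    apply: eq_bigr => t /andP [ts nP].
    have [ha hb] := hsp t ts.
    move: ha hb nP; rewrite /Ff /tq /tp1 /tp2 /tp3 /P.
    case: t {ts} => [[c0 [p a]] [q b]] /=.
    case: p; case: q => //= ha hb _.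
    * by rewrite (Dop_oe delta_add delta_scale delta_mul) // DoddZ.
    * by rewrite (Dop_eo delta_add delta_scale delta_mul) // DoddZ.
  have hsplit c : D c = Ec c + Dodd delta Q P1 P2 P3 c.
    by rewrite hsD (bigID P) /= -hO.
  have hEp c r : parJ r c -> parJ r (Ec c).
    move=> hc; rewrite /Ec big_seq_cond; apply: big_ind.
    - exact: par0.
    - exact: parD.
    - move=> t /andP [ts Pt]; have [ha hb] := hsp t ts.
      move: ha hb Pt; rewrite /Ff /P.
      case: t {ts} => [[c0 [p a]] [q b]] /= ha hb /eqP e; subst q.
      by apply: parZ; apply: (parDop delta_add).
  have hEadd x y : Ec (x + y) = Ec x + Ec y.
    rewrite /Ec -big_split /=; apply: eq_bigr => t _.
    by rewrite /Ff (DopD delta_add) scalerDr.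
  have hE0h c r : parJ r c -> Ec c = 0.
    move=> hc.
    have h1 := hEp _ _ hc.
    have h2 : parJ (~~ r) (D c) by exact: hodd.
    have h3 : parJ (~~ r) (Dodd delta Q P1 P2 P3 c).
      by have [_ hp _] := Dsd Q P1 P2 P3; rewrite -addbT; exact: hp.
    have h4 : parJ (~~ r) (Ec c).
      have -> : Ec c = D c - Dodd delta Q P1 P2 P3 c by rewrite hsplit addrK.
      by apply: parD => //; apply: parN.
    by case: r hc h1 h2 h3 h4 => hc h1 h2 h3 h4; [apply: parTF | apply: parTF].
  have hE0 c : Ec c = 0.
    rewrite (splitJ c) hEadd (hE0h _ false) ?(hE0h _ true) ?addr0 //.
  apply: (sder_ext (D' := Dodd delta Q P1 P2 P3)); last exact: Dsd.
  by move=> u; rewrite hsplit hE0 add0r.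
Qed.

Definition jeN (l : nat) (u : JCK Z) : Z :=
  match l with 0 => je0 u | 1 => je1 u | 2 => je2 u | _ => je3 u end%N.
Definition joN (l : nat) (u : JCK Z) : Z :=
  match l with 0 => jo0 u | 1 => jo1 u | 2 => jo2 u | _ => jo3 u end%N.
Lemma jcompE l u : jcomp l u = (jeN l u, joN l u).
Proof. by case: l => [|[|[|l]]]. Qed.

Lemma evpart (x y : JCK Z) : parJ false x -> parJ true y ->
  (forall l, jeN l (x + y) = jeN l x) /\ (forall l, joN l (x + y) = joN l y).
Proof.
case: x => [[[[a0 a1] a2] a3] [[[b0 b1] b2] b3]].
case: y => [[[[c0 c1] c2] c3] [[[e0 e1] e2] e3]].
rewrite /parJ /= ?zero4E => -[-> -> -> ->] -[-> -> -> ->].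
by rewrite addJE; split => -[|[|[|l]]] /=; rewrite ?addr0 ?add0r.
Qed.

Lemma pW1L : parJ false (@eW1 F Z). Proof. by []. Qed.
Lemma pW2L : parJ false (@eW2 F Z). Proof. by []. Qed.
Lemma pW3L : parJ false (@eW3 F Z). Proof. by []. Qed.
Lemma pXL : parJ true (@eX F Z). Proof. by []. Qed.
Lemma pX1L : parJ true (@eX1 F Z). Proof. by []. Qed.
Lemma pX2L : parJ true (@eX2 F Z). Proof. by []. Qed.
Lemma pX3L : parJ true (@eX3 F Z). Proof. by []. Qed.
Lemma degI (f : Z) : inJdeg 0 (jI f). Proof. by move=> [|[|[|[|l]]]]. Qed.
Lemma degW1 : inJdeg 1 (@eW1 F Z). Proof. by move=> [|[|[|[|l]]]]. Qed.
Lemma degW2 : inJdeg 2 (@eW2 F Z). Proof. by move=> [|[|[|[|l]]]]. Qed.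
Lemma degW3 : inJdeg 3 (@eW3 F Z). Proof. by move=> [|[|[|[|l]]]]. Qed.
Lemma degX : inJdeg 0 (@eX F Z). Proof. by move=> [|[|[|[|l]]]]. Qed.
Lemma degX1 : inJdeg 1 (@eX1 F Z). Proof. by move=> [|[|[|[|l]]]]. Qed.
Lemma degX2 : inJdeg 2 (@eX2 F Z). Proof. by move=> [|[|[|[|l]]]]. Qed.
Lemma degX3 : inJdeg 3 (@eX3 F Z). Proof. by move=> [|[|[|[|l]]]]. Qed.

Lemma der00_char D : der00 delta D -> exists phi r q,
  [/\ (forall f g, phi (f + g) = phi f + phi g),
     (forall (c : F) f, phi (c *: f) = c *: phi f),
     (forall f g, phi (f * g) = phi f * g + f * phi g),
     (forall f, phi (delta f) = delta (phi f) + r * delta f + r * delta f)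
   & forall u, D u = Dev phi r u + Dodd delta q 0 0 0 u].
Proof.
case=> [[D0 [D1 [h0 h1 hsum]]] hg].
have [_ hp0 _] := h0; have [_ hp1 _] := h1.
have gz k u l : (k < 4)%N -> inJdeg k u -> (l < 4)%N -> l != k ->
    jeN l (D u) = 0 /\ joN l (D u) = 0.
  by move=> hk hu hl hlk; have := hg k u hk hu l hl hlk; rewrite jcompE => /pair0.
have ev u : parJ false u -> (forall l, jeN l (D u) = jeN l (D0 u)) /\
                            (forall l, joN l (D u) = joN l (D1 u)).
  by move=> hu; rewrite hsum; exact: evpart (hp0 false u hu) (hp1 false u hu).
have od u : parJ true u -> (forall l, jeN l (D u) = jeN l (D1 u)) /\
                           (forall l, joN l (D u) = joN l (D0 u)).
  by move=> hu; rewrite hsum addrC; exact: evpart (hp1 true u hu) (hp0 true u hu).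
have hD1 := oddc h1.
have z1 : jo0 (D1 eW1) = 0.
  have [_ e] := ev _ (erefl _ : parJ false (@eW1 F Z)); move: (e 0%N) => /= <-.
  by case: (gz 1%N eW1 0%N erefl degW1 erefl erefl).
have z2 : jo0 (D1 eW2) = 0.
  have [_ e] := ev _ (erefl _ : parJ false (@eW2 F Z)); move: (e 0%N) => /= <-.
  by case: (gz 2%N eW2 0%N erefl degW2 erefl erefl).
have z3 : jo0 (D1 eW3) = 0.
  have [_ e] := ev _ (erefl _ : parJ false (@eW3 F Z)); move: (e 0%N) => /= <-.
  by case: (gz 3%N eW3 0%N erefl degW3 erefl erefl).
have E0 k u l : parJ false u -> (k < 4)%N -> inJdeg k u -> (l < 4)%N -> l != k ->
    jeN l (D0 u) = 0.
  move=> hu hk hd hl hlk; have [e _] := ev u hu; rewrite -e.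
  by case: (gz k u l hk hd hl hlk).
have O0 k u l : parJ true u -> (k < 4)%N -> inJdeg k u -> (l < 4)%N -> l != k ->
    joN l (D0 u) = 0.
  move=> hu hk hd hl hlk; have [_ e] := od u hu; rewrite -e.
  by case: (gz k u l hk hd hl hlk).
have [phi [r [pa ps pm pd hD0]]] := even_char delta_add delta_scale delta_mul char2 ZdZ h0
  (fun f => And3 (E0 0%N _ 1%N (parI f) erefl (degI f) erefl erefl)
                 (E0 0%N _ 2%N (parI f) erefl (degI f) erefl erefl)
                 (E0 0%N _ 3%N (parI f) erefl (degI f) erefl erefl))
  (And3 (E0 1%N eW1 0%N pW1L erefl degW1 erefl erefl) (E0 1%N eW1 2%N pW1L erefl degW1 erefl erefl)
        (E0 1%N eW1 3%N pW1L erefl degW1 erefl erefl))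
  (And3 (E0 2%N eW2 0%N pW2L erefl degW2 erefl erefl) (E0 2%N eW2 1%N pW2L erefl degW2 erefl erefl)
        (E0 2%N eW2 3%N pW2L erefl degW2 erefl erefl))
  (And3 (E0 3%N eW3 0%N pW3L erefl degW3 erefl erefl) (E0 3%N eW3 1%N pW3L erefl degW3 erefl erefl)
        (E0 3%N eW3 2%N pW3L erefl degW3 erefl erefl))
  (And3 (O0 0%N eX 1%N pXL erefl degX erefl erefl) (O0 0%N eX 2%N pXL erefl degX erefl erefl)
        (O0 0%N eX 3%N pXL erefl degX erefl erefl))
  (And3 (O0 1%N eX1 0%N pX1L erefl degX1 erefl erefl) (O0 1%N eX1 2%N pX1L erefl degX1 erefl erefl)
        (O0 1%N eX1 3%N pX1L erefl degX1 erefl erefl))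
  (And3 (O0 2%N eX2 0%N pX2L erefl degX2 erefl erefl) (O0 2%N eX2 1%N pX2L erefl degX2 erefl erefl)
        (O0 2%N eX2 3%N pX2L erefl degX2 erefl erefl))
  (And3 (O0 3%N eX3 0%N pX3L erefl degX3 erefl erefl) (O0 3%N eX3 1%N pX3L erefl degX3 erefl erefl)
        (O0 3%N eX3 2%N pX3L erefl degX3 erefl erefl)).
exists phi, r, (jo1 (D1 eW1)); split => // u.
by rewrite hsum hD0 hD1 z1 z2 z3.
Qed.

Lemma phi0L (phi : Z -> Z) : (forall f g, phi (f + g) = phi f + phi g) -> phi 0 = 0.
Proof. by move=> pa; apply: (@addrI _ (phi 0)); rewrite -pa !addr0. Qed.
Lemma phi1L (phi : Z -> Z) : (forall f g, phi (f * g) = phi f * g + f * phi g) -> phi 1 = 0.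
Proof.
by move=> pm; apply: (@addrI _ (phi 1)); rewrite addr0 -{1}[phi 1]mulr1 -{2}[phi 1]mul1r -pm mulr1.
Qed.

Lemma restr_form D phi r q : (forall u, D u = Dev phi r u + Dodd delta q 0 0 0 u) ->
  forall k, restrK D k = (phi k.1 - k.2 * q, phi k.2 + k.2 * r).
Proof.
move=> hD [f g]; rewrite /restrK hD /KtoJ /Dev; jnorm.
by apply: pairP; cfin.
Qed.

Lemma part2 :
  (forall D1 D2 : JCK Z -> JCK Z,
      der00 delta D1 -> der00 delta D2 ->
      (forall k, restrK D1 k = restrK D2 k) -> forall u, D1 u = D2 u)
   /\ (forall D : JCK Z -> JCK Z, der00 delta D -> derbarK delta (restrK D))
   /\ (forall d : KCK Z -> KCK Z, derbarK delta d ->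
         exists D : JCK Z -> JCK Z,
           der00 delta D /\ forall k, restrK D k = d k).
Proof.
split; [|split].
- move=> D1 D2 h1 h2 hr u.
  have [phi1 [r1 [q1 [pa1 ps1 pm1 pd1 hD1]]]] := der00_char h1.
  have [phi2 [r2 [q2 [pa2 ps2 pm2 pd2 hD2]]]] := der00_char h2.
  have ef f : phi1 f = phi2 f.
    by have := hr (f, 0); rewrite !(restr_form hD1) !(restr_form hD2) /= !mul0r !subr0 => -[].
  have eq : q1 = q2.
    have := hr (0, 1); rewrite !(restr_form hD1) !(restr_form hD2) /= (phi0L pa1) (phi0L pa2).
    by rewrite !mul1r => -[] /eqP; rewrite !sub0r eqr_opp => /eqP.
  have er : r1 = r2.
    have := hr (0, 1); rewrite !(restr_form hD1) !(restr_form hD2) /= (phi1L pm1) (phi1L pm2).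
    by rewrite !mul1r !add0r => -[].
  by rewrite hD1 hD2 eq er /Dev !ef.
- move=> D hD00.
  have [phi [r [q [pa ps pm pd hD]]]] := der00_char hD00.
  exists (fun k => (phi k.1, phi k.2 + k.2 * r)), (- q); split.
    exact: (DevK_sder delta_add delta_mul pa ps pm pd).
  move=> [f g]; rewrite (restr_form hD) /etaK /= addKE addr0.
  by rewrite mulrN.
- move=> d [D0K [a [hK hd]]].
  have [phi [r [pa ps pm pd hK']]] := evenK_char delta_add delta_mul hK.
  exists (fun u => Dev phi r u + Dodd delta (- a) 0 0 0 u); split.
    split.
      exists (Dev phi r), (Dodd delta (- a) 0 0 0); split => //.
        exact: (Dev_sder delta_add delta_mul pa ps pm pd).
      try exact: Dsd.
    move=> k u hk hu l hl hlk; have := hu l hl hlk; clear hu.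
    have p0 := phi0L pa.
    case: u => [[[[a0 a1] a2] a3] [[[b0 b1] b2] b3]].
    rewrite !jcompE.
    case: l hl hlk => [|[|[|[|l]]]] // _ _ /pair0 []; cbv beta iota delta [jeN joN je0 je1 je2 je3 jo0 jo1 jo2 jo3 fst snd] => h1 h2;
      rewrite /Dev; jnorm; rewrite ?h1 ?h2 ?p0 (_ : (0 : Z * Z) = (0, 0)) //; apply: pairP; cfin.
  move=> [f g]; rewrite (restr_form (D := fun u => Dev phi r u + Dodd delta (- a) 0 0 0 u) (phi := phi) (r := r) (q := - a)) //.
  rewrite hd hK' /etaK /= addKE addr0.
  by rewrite mulrN opprK.
Qed.

Lemma part3 :
  exists Phi : JCK Z -> (JCK Z -> JCK Z),
     [/\ (forall u, parJ true u -> odd_der (mulJ delta) (@parJ F Z) (Phi u)),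
         (forall (c : F) u v, parJ true u -> parJ true v ->
            forall w, Phi (c *: u + v) w = c *: Phi u w + Phi v w),
         (forall u v, parJ true u -> parJ true v ->
            (forall w, Phi u w = Phi v w) -> u = v) &
         (forall D, odd_der (mulJ delta) (@parJ F Z) D ->
            exists2 u, parJ true u & forall w, D w = Phi u w)].
Proof.
exists (fun u w => Dodd delta (jo0 u) (jo1 u) (jo2 u) (jo3 u) w); split.
- by move=> u _; exact: Dsd.
- move=> c u v _ _ w; rewrite (DoddD delta_add delta_scale).
  by case: u => [[[[a0 a1] a2] a3] [[[b0 b1] b2] b3]];
     case: v => [[[[c0 c1] c2] c3] [[[e0 e1] e2] e3]].
- move=> u v.
  case: u => [[[[a0 a1] a2] a3] [[[b0 b1] b2] b3]].
  case: v => [[[[c0 c1] c2] c3] [[[e0 e1] e2] e3]].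
  rewrite /parJ /= ?zero4E => -[-> -> -> ->] -[-> -> -> ->] h.
  have h1 := h eW1; have h2 := h eW2; have h3 := h eW3.
  jnormH h1; jnormH h2; jnormH h3.
  move/J8inj: h1 => [_ [f4 f5 _ _]]; move/J8inj: h2 => [_ [g4 _ _ _]].
  move/J8inj: h3 => [_ [k4 _ _ _]].
  have -> : b0 = e0 by apply: (eqf (K:=1) f5); cfin.
  have -> : b1 = e1 by apply: (eqf (K:=1) f4); cfin.
  have -> : b2 = e2 by apply: (eqf (K:=1) g4); cfin.
  have -> : b3 = e3 by apply: (eqf (K:=1) k4); cfin.
  by [].
- move=> D hs.
  exists (mkJ 0 0 0 0 (jo1 (D eW1)) (jo0 (D eW1)) (jo0 (D eW2)) (jo0 (D eW3))) => //.
  by move=> w; rewrite (oddc hs w).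
Qed.
End Final.

End MG.
Import MG.

Unset Implicit Arguments.
Local Open Scope ring_scope.

Theorem corollary4p4 (F : fieldType) (Z : comAlgType F) (delta : Z -> Z)
  (char_neq2 : (2%:R : F) != 0)
  (delta_add : forall f g : Z, delta (f + g) = delta f + delta g)
  (delta_scale : forall (c : F) (f : Z), delta (c *: f) = c *: delta f)
  (delta_mul : forall f g : Z, delta (f * g) = delta f * g + f * delta g)
  (ZdeltaZ : forall z : Z, exists s : seq (Z * Z),
      z = \sum_(p <- s) p.1 * delta p.2) :
  (* (i) Der(J)_1 = Inder(J)_1 *)
  (forall D : JCK Z -> JCK Z,
     odd_der (mulJ delta) (@parJ F Z) D <->
     odd_inder (mulJ delta) (@parJ F Z) D)
  /\
  (* (ii) restriction Der(J)^{[0,0]} -> Der(K) is injective with image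
     \overline{Der}(K) *)
  ((forall D1 D2 : JCK Z -> JCK Z,
      der00 delta D1 -> der00 delta D2 ->
      (forall k, restrK D1 k = restrK D2 k) -> forall u, D1 u = D2 u)
   /\ (forall D : JCK Z -> JCK Z, der00 delta D -> derbarK delta (restrK D))
   /\ (forall d : KCK Z -> KCK Z, derbarK delta d ->
         exists D : JCK Z -> JCK Z,
           der00 delta D /\ forall k, restrK D k = d k))
  /\
  (* (iii) dim Der(J)_1 = dim J_1 (= 4 dim Z, J_1 being Z^4):
     an F-linear bijection J_1 -> Der(J)_1 *)
  (exists Phi : JCK Z -> (JCK Z -> JCK Z),
     [/\ (forall u, parJ true u -> odd_der (mulJ delta) (@parJ F Z) (Phi u)),
         (forall (c : F) u v, parJ true u -> parJ true v ->
            forall w, Phi (c *: u + v) w = c *: Phi u w + Phi v w),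
         (forall u v, parJ true u -> parJ true v ->
            (forall w, Phi u w = Phi v w) -> u = v) &
         (forall D, odd_der (mulJ delta) (@parJ F Z) D ->
            exists2 u, parJ true u & forall w, D w = Phi u w)]).
Proof.
split; first by move=> D; exact: (part1 delta_add delta_scale delta_mul char_neq2 ZdeltaZ D).
split; first exact: (part2 delta_add delta_scale delta_mul char_neq2 ZdeltaZ).
exact: (part3 delta_add delta_scale delta_mul char_neq2 ZdeltaZ).
Qed.
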